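(* Let $k$ be a positive integer and let $c:\mathbb{Q}^{\beth_\omega}\to\{1,\dots,k\}$ be an arbitrary $k$-colouring. Let $\Pi$ be a finite set of patterns. Then there is a subset $A\subset B$ with $|A|=\aleph_1$ such that for each $\pi\in\Pi$ the set $$\{x\in\mathbb{Q}^{\beth_\omega}: x \text{ lies in the linear span of } A \text{ and has pattern } \pi\}$$ is monochromatic under $c$.
   Context: $\beth_\omega=\sup\{\aleph_0,2^{\aleph_0},2^{2^{\aleph_0}},\dots\}$. For a cardinal $\kappa$, $\mathbb{Q}^\kappa$ denotes the rational vector space of dimension $\kappa$, i.e. the direct sum (not product) of $\kappa$ copies of $\mathbb{Q}$, equipped with a basis $B=\{e_\alpha\}$ indexed by (and well-ordered by) the ordinals less than the least ordinal of cardinality $\kappa$. Every nonzero $x\in\mathbb{Q}^\kappa$ can be written uniquely as $x=\sum_{i=1}^n x_i e_{\alpha_i}$ with $n\ge1$, each $x_i$ a nonzero rational, and $\alpha_1<\alpha_2<\dots<\alpha_n$; the finite sequence $(x_1,x_2,\dots,x_n)$ is called the pattern of $x$, and $n$ is its length. A pattern is any finite nonempty sequence of nonzero rationals. *)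

(* Defs.v *)
From HB Require Import structures.
From mathcomp Require Import all_boot all_order all_algebra.
Set Implicit Arguments. Unset Strict Implicit. Unset Printing Implicit Defensive.
Import Order.TTheory GRing.Theory Num.Theory.
Local Open Scope ring_scope.

(* beth_type n has cardinality beth_n : nat, P(nat), P(P(nat)), ... *)
Fixpoint beth_type (n : nat) : Type :=
  match n with
  | 0 => nat
  | S m => beth_type m -> Prop
  end.

(* A type of cardinality beth_omega = sup_n beth_n. *)
Definition beth_omega_type : Type := { n : nat & beth_type n }.

Definition equinumerous (X Y : Type) : Prop :=
  exists f : X -> Y, bijective f.

Definition card_le (X Y : Type) : Prop :=
  exists f : X -> Y, injective f.

Definition strict_well_order (X : Type) (lt : X -> X -> Prop) : Prop :=
  (forall x, ~ lt x x) /\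
  (forall x y z, lt x y -> lt y z -> lt x z) /\
  (forall x y, lt x y \/ x = y \/ lt y x) /\
  well_founded lt.

(* (I, lt) is order-isomorphic to the least ordinal of cardinality beth_omega:
   a well-order of cardinality beth_omega all of whose proper initial segments
   have strictly smaller cardinality. *)
Definition initial_ordinal_beth_omega (I : Type) (lt : I -> I -> Prop) : Prop :=
  strict_well_order lt /\
  equinumerous I beth_omega_type /\
  (forall i : I, ~ card_le I { j : I | lt j i }).

Definition countable_set (X : Type) (A : X -> Prop) : Prop :=
  exists f : X -> nat, forall x y, A x -> A y -> f x = f y -> x = y.

(* |A| = aleph_1 : A is uncountable and admits a well-order all of whose
   proper initial segments are countable. *)
Definition card_aleph1 (X : Type) (A : X -> Prop) : Prop :=
  ~ countable_set A /\
  exists R : {x : X | A x} -> {x : X | A x} -> Prop,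
    strict_well_order R /\
    forall a : {x : X | A x}, countable_set (fun b => R b a).

(* finitely supported functions I -> Q = direct sum of copies of Q *)
Definition finsupp (I : eqType) (x : I -> rat) : Prop :=
  exists s : seq I, forall i, x i != 0 -> i \in s.

Definition vecQ (I : eqType) : Type := { x : I -> rat | finsupp x }.

Definition in_span (I : eqType) (A : I -> Prop) (x : I -> rat) : Prop :=
  exists l : seq (I * rat),
    (forall p, p \in l -> A p.1) /\
    forall i, x i = \sum_(p <- l) (if p.1 == i then p.2 else 0).

Fixpoint increasing (I : Type) (lt : I -> I -> Prop) (l : seq I) : Prop :=
  match l with
  | a :: ((b :: _) as t) => lt a b /\ increasing lt t
  | _ => True
  end.

Definition is_pattern (pi : seq rat) : Prop :=
  (0 < size pi)%N /\ forall q, q \in pi -> q != 0.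

Definition has_pattern (I : eqType) (lt : I -> I -> Prop) (x : I -> rat)
    (pi : seq rat) : Prop :=
  exists l : seq (I * rat),
    [seq p.2 | p <- l] = pi /\
    increasing lt [seq p.1 | p <- l] /\
    (forall p, p \in l -> x p.1 = p.2) /\
    (forall i, i \notin [seq p.1 | p <- l] -> x i = 0).

(* Main.v *)
Require Import Defs.
From HB Require Import structures.
From mathcomp Require Import all_boot all_order all_algebra.
From Stdlib Require Import ClassicalEpsilon Classical FunctionalExtensionality PropExtensionality ProofIrrelevance Wellfounded.
Set Implicit Arguments. Unset Strict Implicit. Unset Printing Implicit Defensive.
Import Order.TTheory GRing.Theory Num.Theory.

Definition le_set (I B : Type) (X : I -> Prop) : Prop :=
  exists g : I -> B, forall x y, X x -> X y -> g x = g y -> x = y.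

Lemma le_set_mono (I B : Type) (X Y : I -> Prop) :
  (forall x, X x -> Y x) -> le_set B Y -> le_set B X.
Proof. move=> hXY [g hg]; exists g => x y hx hy; apply: hg; auto. Qed.

Lemma le_set_comp (I B C : Type) (X : I -> Prop) (j : B -> C) :
  injective j -> le_set C X -> le_set B X -> le_set C X.
Proof. by []. Qed.

Lemma le_set_inj (I B C : Type) (X : I -> Prop) (j : B -> C) :
  injective j -> le_set B X -> le_set C X.
Proof. move=> hj [g hg]; exists (j \o g) => x y hx hy /hj; exact: hg. Qed.

Definition powmap (P Q : Type) (j : P -> Q) (S : P -> Prop) : Q -> Prop :=
  fun q => exists p, j p = q /\ S p.

Lemma powmap_inj (P Q : Type) (j : P -> Q) : injective j -> injective (powmap j).
Proof.
move=> hj S S' e; apply: functional_extensionality => p.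
apply: propositional_extensionality.
have h1 : powmap j S (j p) = powmap j S' (j p) by rewrite e.
split=> hp.
- have : powmap j S (j p) by exists p.
  rewrite h1 => -[p' [/hj -> //]].
- have : powmap j S' (j p) by exists p.
  rewrite -h1 => -[p' [/hj -> //]].
Qed.

Lemma cantor (B : Type) (g : (B -> Prop) -> B) : ~ injective g.
Proof.
move=> hg.
pose D := fun b => exists S, g S = b /\ ~ S b.
have [hD|hD] := classic (D (g D)).
- have [S [/hg eS nS]] := hD. by subst S.
- apply hD; exists D; split=> //.
Qed.

Lemma nonempty_of_notle (I B : Type) (b : B) (X : I -> Prop) :
  ~ le_set B X -> exists x, X x.
Proof.
move=> h; apply: NNPP => hn; apply: h; exists (fun _ => b) => x y hx.
by exfalso; apply: hn; exists x.
Qed.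

Definition good (L : Type) : Prop :=
  exists (i : nat -> L) (q : seq L -> L), injective i /\ injective q.

Lemma good_pow (B : Type) : good B -> good (B -> Prop).
Proof.
move=> [i [q [hi hq]]].
exists (fun n => fun b => b = i n).
pose j := fun (x : nat + nat * B) => match x with
  | inl k => q [:: i 0; i k] | inr (k, b) => q [:: i 1; i k; b] end.
have hj : injective j.
  case=> [k|[k b]] [k'|[k' b']] /hq //=.
  - by case=> /hi ->.
  - by case=> /hi -> ->.
pose T := fun (L : seq (B -> Prop)) (x : nat + nat * B) => match x with
  | inl k => k = size L | inr (k, b) => nth (fun _ => False) L k b end.
have hT : injective T.
  move=> L L' e.
  have es : size L = size L'.
    have : T L (inl (size L)) = T L' (inl (size L)) by rewrite e.
    by rewrite /= => <-.
  apply: (eq_from_nth (x0 := fun _ => False)) => // n _.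
  apply: functional_extensionality => b.
  have : T L (inr (n, b)) = T L' (inr (n, b)) by rewrite e.
  by [].
exists (fun L => powmap j (T L)); split.
- move=> n n' e.
  have h := f_equal (fun F => F (i n)) e; simpl in h.
  by apply: hi; rewrite -h.
- move=> L L' /(powmap_inj hj); exact: hT.
Qed.

Lemma good_beth (m : nat) : good (beth_type m).
Proof.
elim: m => [|m ih].
- exists id, pickle; split=> //; exact: (pcan_inj (@pickleK _)).
- exact: good_pow.
Qed.

Section Ord.
Variables (I : eqType) (lt : I -> I -> Prop).
Hypotheses (irr : forall x, ~ lt x x)
  (tr : forall x y z, lt x y -> lt y z -> lt x z)
  (tot : forall x y, lt x y \/ x = y \/ lt y x)
  (wf : well_founded lt).

Lemma inc_cons (s : seq I) a :
  increasing lt (a :: s) <-> increasing lt s /\ (forall w, w \in s -> lt a w).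
Proof.
elim: s a => [|b t ih] a /=; first by split.
split.
- move=> [hab hbt]; split=> // w; rewrite in_cons => /orP [/eqP ->//|wt].
  have [_ h] := (ih b).1 hbt; exact: tr hab (h w wt).
- move=> [hbt h]; split=> //; apply: h; exact: mem_head.
Qed.

Lemma inc_rcons (s : seq I) z :
  increasing lt (rcons s z) <-> increasing lt s /\ (forall w, w \in s -> lt w z).
Proof.
elim: s => [|a s ih]; first by split=> // _; split.
rewrite rcons_cons; split.
- move/inc_cons=> [/ih [hs hz] ha]; split.
  + apply/inc_cons; split=> //.
    by move=> w ws; apply: ha; rewrite mem_rcons in_cons ws orbT.
  + move=> w; rewrite in_cons => /orP [/eqP ->|ws]; last exact: hz.
    by apply: ha; rewrite mem_rcons mem_head.
- move=> [/inc_cons [hs ha] hz]; apply/inc_cons; split.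
  + apply/ih; split=> //.
    by move=> w ws; apply: hz; rewrite in_cons ws orbT.
  + move=> w; rewrite mem_rcons in_cons => /orP [/eqP ->|ws]; last exact: ha.
    by apply: hz; rewrite mem_head.
Qed.

Lemma map_inj_on (B : Type) (P : I -> Prop) (g : I -> B) (l1 l2 : seq I) :
  (forall x y, P x -> P y -> g x = g y -> x = y) ->
  (forall w, w \in l1 -> P w) -> (forall w, w \in l2 -> P w) ->
  map g l1 = map g l2 -> l1 = l2.
Proof.
move=> hg; elim: l1 l2 => [|a l1 ih] [|b l2] //= h1 h2 [eab el].
have -> : a = b.
  apply: hg eab; [apply: h1 | apply: h2]; exact: mem_head.
congr cons; apply: ih el.
- by move=> w wl; apply: h1; rewrite in_cons wl orbT.
- by move=> w wl; apply: h2; rewrite in_cons wl orbT.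
Qed.

Section Tree.
Variables (n : nat) (X : I -> Prop) (f : seq I -> nat).

Definition Fbody (x z : I) (rec : forall w, lt w z -> Prop) : Prop :=
  X z /\ lt z x /\ forall s : seq I, (forall w, w \in s -> exists h : lt w z, rec w h) ->
    increasing lt s -> size s = n -> f (rcons s z) = f (rcons s x).

Definition C x := Fix wf (fun _ => Prop) (Fbody x).

Lemma C_eq x z : C x z <-> X z /\ lt z x /\ forall s : seq I,
  (forall w, w \in s -> lt w z /\ C x w) ->
  increasing lt s -> size s = n -> f (rcons s z) = f (rcons s x).
Proof.
rewrite /C Fix_eq; last first.
  move=> z0 g h e.
  have -> : g = h; last by [].
  apply: functional_extensionality_dep => w.
  apply: functional_extensionality_dep => p; exact: e.
rewrite /Fbody; split.
- move=> [hX [hl hs]]; do 2!split=> //.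
  move=> s hw; apply: hs => w /hw [h1 h2]; by exists h1.
- move=> [hX [hl hs]]; do 2!split=> //.
  move=> s hw; apply: hs => w /hw [h1 h2]; by split.
Qed.

Lemma C_X x z : C x z -> X z.
Proof. by move/C_eq => []. Qed.

Lemma C_lt x z : C x z -> lt z x.
Proof. by move/C_eq => [_ []]. Qed.

Lemma C_tree x z : C x z -> forall w, C z w <-> C x w /\ lt w z.
Proof.
move=> hxz w; elim/(well_founded_ind wf): w => w ih.
have [hXz [hzx hsz]] := (C_eq x z).1 hxz.
split.
- move=> hzw; have [hXw [hwz hsw]] := (C_eq z w).1 hzw.
  split=> //; apply/C_eq; split=> //; split; first exact: tr hwz hzx.
  move=> s hs hinc hsize.
  have hs' : forall u, u \in s -> lt u w /\ C z u.
    move=> u us; have [hu1 hu2] := hs u us; split=> //.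
    by apply/(ih u hu1); split=> //; exact: tr hu1 hwz.
  rewrite (hsw s hs' hinc hsize); apply: hsz => // u us.
  have [hu1 hu2] := hs u us; split=> //; exact: tr hu1 hwz.
- move=> [hxw hwz]; have [hXw [hwx hsw]] := (C_eq x w).1 hxw.
  apply/C_eq; split=> //; split=> //.
  move=> s hs hinc hsize.
  have hs' : forall u, u \in s -> lt u w /\ C x u.
    move=> u us; have [hu1 hu2] := hs u us; split=> //.
    by have [] := (ih u hu1).1 hu2.
  rewrite (hsw s hs' hinc hsize); symmetry; apply: hsz => // u us.
  have [hu1 hu2] := hs' u us; split=> //; exact: tr hu1 hwz.
Qed.

Definition D x z := C x z \/ z = x.

Lemma D_C x z : D x z -> forall w, C z w <-> D x w /\ lt w z.
Proof.
case=> [hxz|->] w.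
- rewrite (C_tree hxz w); split.
  + by move=> [h1 h2]; split=> //; left.
  + move=> [[h1|e] h2] //; subst w.
    by exfalso; exact: irr (tr h2 (C_lt hxz)).
- split.
  + by move=> h; split; [left | exact: C_lt h].
  + move=> [[h1|e] h2] //; subst w.
    by exfalso; exact: irr h2.
Qed.

Lemma D_X x z : X x -> D x z -> X z.
Proof. by move=> hx [/C_X|->]. Qed.

Definition inj_on (L : Type) (P : I -> Prop) (e : I -> L) :=
  forall z w, P z -> P w -> e z = e w -> z = w.

Definition Enc (L : Type) (E : I -> I -> L) (x : I) (t : nat * seq L * nat) : Prop :=
  match t with (k, l, c) =>
    match k with
    | 0 => exists z, D x z /\ l = [:: E x z]
    | 1 => exists z w, D x z /\ D x w /\ lt z w /\ l = [:: E x z; E x w]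
    | _ => exists s, (forall u, u \in s -> D x u) /\ l = map (E x) s /\ f s = c
    end
  end.

Lemma enc_claim (L : Type) (E : I -> I -> L)
  (hEi : forall x, X x -> inj_on (D x) (E x)) x x' :
  X x -> X x' -> Enc E x = Enc E x' ->
  forall z, D x z -> D x' z /\ E x z = E x' z.
Proof.
move=> hx hx' he z; elim/(well_founded_ind wf): z => z ih hz.
have e0 : forall t, Enc E x t <-> Enc E x' t by move=> t; rewrite he.
have hj := hEi x hx; have hj' := hEi x' hx'.
pose a := E x z.
have [z' [hz' [ea]]] : exists z', D x' z' /\ [:: a] = [:: E x' z'].
  by apply/(e0 (0%N, [:: a], 0%N)); exists z.
have hS : forall w, D x w /\ lt w z <-> D x' w /\ lt w z'.
  move=> w; split.
  - move=> [hw hwz]; have [hw' ew] := ih w hwz hw.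
    have [w1 [z1 [h1 [h2 [h3 [e1 e2]]]]]] : exists z1 w1, D x' z1 /\ D x' w1 /\ lt z1 w1 /\
        [:: E x w; a] = [:: E x' z1; E x' w1].
      by apply/(e0 (1%N, [:: E x w; a], 0%N)); exists w, z.
    have ew1 : w1 = w by apply: hj' => //; rewrite -e1.
    have ez1 : z1 = z' by apply: hj' => //; rewrite -e2.
    by subst.
  - move=> [hw hwz'].
    have [w0 [hw0 [e0']]] : exists z, D x z /\ [:: E x' w] = [:: E x z].
      by apply/(e0 (0%N, [:: E x' w], 0%N)); exists w.
    have [w2 [z2 [h1 [h2 [h3 [e1 e2]]]]]] : exists z1 w1, D x z1 /\ D x w1 /\ lt z1 w1 /\
        [:: E x' w; E x' z'] = [:: E x z1; E x w1].
      by apply/(e0 (1%N, [:: E x' w; E x' z'], 0%N)); exists w, z'.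
    have ew2 : w2 = w0 by apply: hj => //; rewrite -e1.
    have ez2 : z2 = z by apply: hj => //; rewrite -e2 -ea.
    subst w2 z2.
    have [hw0' ew0] := ih w0 h3 hw0.
    have ew : w0 = w by apply: hj' => //; rewrite -ew0.
    by subst.
have hCC : forall w, C z w <-> C z' w.
  move=> w; split.
  - by move/(D_C hz w)/hS/(D_C hz' w).
  - by move/(D_C hz' w)/hS/(D_C hz w).
have hcol : forall s, (forall u, u \in s -> C z u) -> increasing lt s -> size s = n ->
    f (rcons s z) = f (rcons s z').
  move=> s hs hinc hsz.
  have hsD : forall u, u \in s -> D x u /\ lt u z by move=> u /hs /(D_C hz u).
  have [s' [hs' [em ef]]] : exists s', (forall u, u \in s' -> D x' u) /\
      map (E x) (rcons s z) = map (E x') s' /\ f s' = f (rcons s z).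
    apply/(e0 (2%N, map (E x) (rcons s z), f (rcons s z))).
    exists (rcons s z); split=> //.
    by move=> u; rewrite mem_rcons in_cons => /orP [/eqP ->|/hsD []].
  have es : s' = rcons s z'.
    apply: (map_inj_on hj') => //.
      move=> u; rewrite mem_rcons in_cons => /orP [/eqP ->|/hsD [hu1 hu2]] //.
      by have [] := ih u hu2 hu1.
    rewrite -em !map_rcons -ea; congr rcons.
    apply/eq_in_map => u /hsD [hu1 hu2]; by have [] := ih u hu2 hu1.
  by rewrite -ef es.
have hXz : X z := D_X hx hz.
have hXz' : X z' := D_X hx' hz'.
case: (tot z z') => [hlt|[e|hlt]].
- exfalso.
  have hz'z : C z' z.
    apply/C_eq; split=> //; split=> // s hs hinc hsz.
    apply: hcol => // u /hs [_ /hCC] //.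
  have := C_lt ((hCC z).2 hz'z); exact: irr.
- by subst z'; split.
- exfalso.
  have hzz' : C z z'.
    apply/C_eq; split=> //; split=> // s hs hinc hsz.
    symmetry; apply: hcol => // u /hs [] //.
  have := C_lt ((hCC z').1 hzz'); exact: irr.
Qed.

End Tree.

Lemma EH (L : Type) (n : nat) (X : I -> Prop) (f : seq I -> nat) :
  good L -> ~ le_set (L -> Prop) X ->
  exists Y : I -> Prop, (forall x, Y x -> X x) /\ ~ le_set L Y /\
    forall s y y', (forall w, w \in s -> Y w) -> increasing lt s -> size s = n ->
      Y y -> Y y' -> (forall w, w \in s -> lt w y) -> (forall w, w \in s -> lt w y') ->
      f (rcons s y) = f (rcons s y').
Proof.
move=> [i [q [hi hq]]] hX.
apply: NNPP => hn.
have hsmall : forall x, X x -> le_set L (C n X f x).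
  move=> x hx; apply: NNPP => hc; apply: hn; exists (C n X f x); split.
    exact: C_X.
  split=> // s y y' hs hinc hsz hy hy' hly hly'.
  have [_ [_ h1]] := (C_eq n X f x y).1 hy.
  have [_ [_ h2]] := (C_eq n X f x y').1 hy'.
  rewrite h1 ?h2 //.
  - by move=> w ws; split; [apply: hly'|apply: hs].
  - by move=> w ws; split; [apply: hly|apply: hs].
have hE : forall x, exists e : I -> L, X x -> inj_on (D n X f x) e.
  move=> x; case: (classic (X x)) => hx; last by exists (fun _ => i 0%N).
  have [g hg] := hsmall x hx.
  exists (fun z => if z == x then q [::] else q [:: g z]) => _ z w hz hw.
  case: (z =P x) => [->|nzx]; case: (w =P x) => [->|nwx] // /hq //.
  case=> /hg; apply.
  - by case: hz.
  - by case: hw.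
pose E := fun x => proj1_sig (constructive_indefinite_description _ (hE x)).
have hEi : forall x, X x -> inj_on (D n X f x) (E x).
  by move=> x; exact: (proj2_sig (constructive_indefinite_description _ (hE x))).
have hEnc : forall x x', X x -> X x' -> Enc n X f E x = Enc n X f E x' -> x = x'.
  move=> x x' hx hx' he.
  have [h1 _] := enc_claim hEi hx hx' he (or_intror erefl).
  have [h2 _] := enc_claim hEi hx' hx (esym he) (or_intror erefl).
  case: h1 => [c1|//]; case: h2 => [c2|//].
  exfalso; exact: irr (tr (C_lt c1) (C_lt c2)).
pose code := fun (t : nat * seq L * nat) => let: (k, l, c) := t in q (i k :: i c :: l).
have hcode : injective code.
  move=> [[k l] c] [[k' l'] c'] /hq [/hi -> /hi -> ->] //.
apply: hX; exists (fun x => powmap code (Enc n X f E x)) => x x' hx hx' /(powmap_inj hcode).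
exact: hEnc.
Qed.


Lemma extract (C0 : I -> Prop) : ~ le_set nat C0 ->
  exists A, (forall x, A x -> C0 x) /\ ~ le_set nat A /\
    forall a, A a -> le_set nat (fun z => A z /\ lt z a).
Proof.
move=> hC.
exists (fun x => C0 x /\ le_set nat (fun y => C0 y /\ lt y x)); split; first by move=> x [].
split.
- move=> hA; have hA' := hA; apply: hC; apply: le_set_mono hA' => x.
  elim/(well_founded_ind wf): x => x ih hx; split=> //.
  apply: le_set_mono hA => y [hy hyx]; exact: ih.
- move=> a [_ ha]; apply: le_set_mono ha => z [[hz _] hza]; by split.
Qed.

Lemma above (A : I -> Prop) : ~ le_set nat A ->
  (forall a, A a -> le_set nat (fun z => A z /\ lt z a)) ->
  forall s, increasing lt s -> (forall w, w \in s -> A w) ->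
  exists y, A y /\ forall w, w \in s -> lt w y.
Proof.
move=> hA hseg s; case/lastP: s => [|s0 a].
  move=> _ _; have [y hy] := nonempty_of_notle 0%N hA; by exists y.
move=> /inc_rcons [hs0 hlt] hin.
have ha : A a by apply: hin; rewrite mem_rcons mem_head.
have [g hg] := hseg a ha.
have [y [hy hny]] : exists y, A y /\ ~ ((A y /\ lt y a) \/ y = a).
  apply: NNPP => hn; apply: hA.
  exists (fun z => if z == a then 0%N else (g z).+1) => x x' hx hx'.
  have hx1 : (A x /\ lt x a) \/ x = a.
    by apply: NNPP => h; apply: hn; exists x.
  have hx1' : (A x' /\ lt x' a) \/ x' = a.
    by apply: NNPP => h; apply: hn; exists x'.
  case: (x =P a) => [->|nxa]; case: (x' =P a) => [->|nxa'] //.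
  case=> /hg; apply.
  - by case: hx1.
  - by case: hx1'.
exists y; split=> //.
have hay : lt a y.
  case: (tot a y) => [//|[e|hya]]; exfalso; apply: hny; [by right | by left].
move=> w; rewrite mem_rcons in_cons => /orP [/eqP ->//|ws].
exact: tr (hlt w ws) hay.
Qed.

Lemma extend (A : I -> Prop) : ~ le_set nat A ->
  (forall a, A a -> le_set nat (fun z => A z /\ lt z a)) ->
  forall k s, increasing lt s -> (forall w, w \in s -> A w) ->
  exists r, size r = k /\ increasing lt (s ++ r) /\ (forall w, w \in s ++ r -> A w).
Proof.
move=> hA hseg; elim=> [|k ih] s hs hin.
  by exists [::]; rewrite cats0.
have [y [hy hly]] := above hA hseg hs hin.
have hs1 : increasing lt (rcons s y) by apply/inc_rcons.
have hin1 : forall w, w \in rcons s y -> A w.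
  by move=> w; rewrite mem_rcons in_cons => /orP [/eqP ->|/hin].
have [r [hr [hinc hall]]] := ih _ hs1 hin1.
exists (y :: r); rewrite -cat_rcons; split=> //; by rewrite /= hr.
Qed.

Lemma ER (m : nat) : forall X : I -> Prop, ~ le_set (beth_type m) X ->
  forall f : seq I -> nat, exists H : I -> Prop,
    (forall x, H x -> X x) /\ ~ le_set nat H /\
    forall s t, (forall w, w \in s -> H w) -> (forall w, w \in t -> H w) ->
      increasing lt s -> increasing lt t -> size s = m.+1 -> size t = m.+1 -> f s = f t.
Proof.
elim: m => [|m ih] X hX f.
- have [j hj] : exists j, ~ le_set nat (fun x => X x /\ f [:: x] = j).
    apply: NNPP => hn.
    have hall : forall j, exists g : I -> nat, forall x y,
        (X x /\ f [:: x] = j) -> (X y /\ f [:: y] = j) -> g x = g y -> x = y.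
      move=> j; apply: NNPP => h; apply: hn; exists j => hl; exact: h.
    pose G := fun j => proj1_sig (constructive_indefinite_description _ (hall j)).
    have hG := fun j => proj2_sig (constructive_indefinite_description _ (hall j)).
    apply: hX; exists (fun x => pickle (f [:: x], G (f [:: x]) x)) => x y hx hy.
    move/(pcan_inj (@pickleK _)) => [e1 e2].
    rewrite e1 in e2.
    exact: (hG (f [:: y]) x y (conj hx e1) (conj hy erefl) e2).
  exists (fun x => X x /\ f [:: x] = j); split; first by move=> x [].
  split=> // s t hs ht _ _.
  case: s hs => [|a [|??]] // hs; case: t ht => [|b [|??]] // ht _ _.
  have [_ ->] := hs a (mem_head _ _); by have [_ ->] := ht b (mem_head _ _).
- have [i0 _] := good_beth m.
  have [Y [hYX [hY hend]]] := EH m.+1 f (good_beth m) hX.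
  have [y0 _] := nonempty_of_notle (i0 0%N) hY.
  pose eps := fun s : seq I => epsilon (inhabits y0) (fun y => Y y /\ forall w, w \in s -> lt w y).
  pose g := fun s : seq I => f (rcons s (eps s)).
  have [H [hHY [hH hhom]]] := ih Y hY g.
  exists H; split; first by move=> x /hHY /hYX.
  split=> //.
  have key : forall s0 a, (forall w, w \in rcons s0 a -> H w) ->
      increasing lt (rcons s0 a) -> size (rcons s0 a) = m.+2 -> f (rcons s0 a) = g s0.
    move=> s0 a hin /inc_rcons [hs0 hlt] hsz.
    have hP : Y (eps s0) /\ forall w, w \in s0 -> lt w (eps s0).
      apply: (@epsilon_spec I (inhabits y0) (fun y => Y y /\ forall w, w \in s0 -> lt w y)).
      exists a; split=> //.
      by apply: hHY; apply: hin; rewrite mem_rcons mem_head.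
    apply: hend => //.
    + by move=> w ws; apply: hHY; apply: hin; rewrite mem_rcons in_cons ws orbT.
    + by move: hsz; rewrite size_rcons => -[].
    + by apply: hHY; apply: hin; rewrite mem_rcons mem_head.
    + exact: hP.1.
    + exact: hP.2.
  move=> s t; case/lastP: s => [|s0 a]; first by [].
  case/lastP: t => [|t0 b]; first by [].
  move=> hs ht hincs hinct hszs hszt.
  rewrite (key _ _ hs hincs hszs) (key _ _ ht hinct hszt).
  apply: hhom.
  + by move=> w ws; apply: hs; rewrite mem_rcons in_cons ws orbT.
  + by move=> w ws; apply: ht; rewrite mem_rcons in_cons ws orbT.
  + by have [] := (inc_rcons s0 a).1 hincs.
  + by have [] := (inc_rcons t0 b).1 hinct.
  + by move: hszs; rewrite size_rcons => -[].
  + by move: hszt; rewrite size_rcons => -[].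
Qed.

End Ord.

Local Open Scope ring_scope.

Definition Pmatch (I : eqType) (pi : seq rat) (s : seq I) (x : I -> rat) : Prop :=
  exists l : seq (I * rat), [seq p.2 | p <- l] = pi /\ [seq p.1 | p <- l] = s /\
    (forall p, p \in l -> x p.1 = p.2) /\ (forall i, i \notin s -> x i = 0).

Lemma pm_unique (I : eqType) pi (s : seq I) (x1 x2 : I -> rat) :
  Pmatch pi s x1 -> Pmatch pi s x2 -> x1 = x2.
Proof.
move=> [l1 [a1 [b1 [c1 d1]]]] [l2 [a2 [b2 [c2 d2]]]].
have el : l1 = l2.
  have e1 := esym (zip_unzip l1); have e2 := esym (zip_unzip l2).
  rewrite e1 e2; rewrite /unzip1 /unzip2.
  have -> : [seq x.1 | x <- l1] = [seq x.1 | x <- l2] by rewrite b1 b2.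
  by have -> : [seq x.2 | x <- l1] = [seq x.2 | x <- l2] by rewrite a1 a2.
subst l2; apply: functional_extensionality => i.
case: (boolP (i \in s)) => his; last by rewrite d1 ?d2.
rewrite -b1 in his; case/mapP: his => p pl ->.
by rewrite c1 ?c2.
Qed.

Lemma vec_eq (I : eqType) (x y : vecQ I) : proj1_sig x = proj1_sig y -> x = y.
Proof.
case: x => x hx; case: y => y hy /= e; subst y.
by rewrite (proof_irrelevance _ hx hy).
Qed.

Lemma zero_fs (I : eqType) : finsupp (fun _ : I => (0 : rat)).
Proof. by exists [::] => i; rewrite eqxx. Qed.

Definition zvec (I : eqType) : vecQ I := exist (@finsupp I) (fun _ => 0) (zero_fs I).

Theorem lemma1 (I : eqType) (lt : I -> I -> Prop)
    (hI : initial_ordinal_beth_omega lt)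
    (k : nat) (hk : (0 < k)%N) (c : vecQ I -> 'I_k)
    (Pi : seq (seq rat)) (hPi : forall pi, pi \in Pi -> is_pattern pi) :
  exists A : I -> Prop,
    card_aleph1 A /\
    forall pi, pi \in Pi ->
      forall x y : vecQ I,
        in_span A (proj1_sig x) -> has_pattern lt (proj1_sig x) pi ->
        in_span A (proj1_sig y) -> has_pattern lt (proj1_sig y) pi ->
        c x = c y.
Proof.
have [[irr [tr [tot wf]]] [[h [h' hK hK']] _]] := hI.
have hnot : forall m, ~ le_set (beth_type m) (fun _ : I => True).
  move=> m [g hg].
  apply: (@cantor (beth_type m) (fun S => g (h' (existT _ m.+1 S)))).
  move=> S S' e.
  have e1 := hg _ _ Logic.I Logic.I e.
  have e' := can_inj hK' e1.
  exact: (Eqdep_dec.inj_pair2_eq_dec _ PeanoNat.Nat.eq_dec _ _ _ _ e').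
pose z0 : vecQ I := zvec I.
pose chi := fun (pi : seq rat) (s : seq I) =>
  nat_of_ord (c (epsilon (inhabits z0) (fun x : vecQ I => Pmatch pi s (proj1_sig x)))).
have chi_eq : forall pi s (x : vecQ I), Pmatch pi s (proj1_sig x) -> chi pi s = c x.
  move=> pi s x hx; rewrite /chi.
  have hs := @epsilon_spec (vecQ I) (inhabits z0) (fun x : vecQ I => Pmatch pi s (proj1_sig x))
    (ex_intro _ x hx).
  by rewrite (vec_eq (pm_unique hs hx)).
pose F := fun s : seq I => pickle [seq chi pi (take (size pi) s) | pi <- Pi].
pose M := foldr (fun pi acc => maxn (size pi) acc) 0%N Pi.
have hM : forall pi, pi \in Pi -> (size pi <= M)%N.
  rewrite /M; elim: (Pi) => [|p P ih] pi //=.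
  rewrite in_cons => /orP [/eqP ->|/ih hp]; first exact: leq_maxl.
  exact: leq_trans hp (leq_maxr _ _).
have [H [_ [hH hhom]]] := ER irr tr tot wf (hnot M) F.
have [A [hAH [hA hseg]]] := extract wf hH.
exists A; split.
  split; first exact: hA.
  exists (fun a b : {x : I | A x} => lt (proj1_sig a) (proj1_sig b)); split.
    split; first by move=> a; exact: irr.
    split; first by move=> a b d; exact: tr.
    split; last exact: (wf_inverse_image _ _ lt (@proj1_sig _ _) wf).
    move=> [a ha] [b hb] /=; case: (tot a b) => [l|[e|l]]; [by left| |by right; right].
    by right; left; subst b; rewrite (proof_irrelevance _ ha hb).
  move=> [a ha]; have [g hg] := hseg a ha.
  exists (fun b : {x : I | A x} => g (proj1_sig b)) => [[b hb] [b' hb']] /= hlt hlt' e.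
  have eb := hg b b' (conj hb hlt) (conj hb' hlt') e; subst b'.
  by rewrite (proof_irrelevance _ hb hb').
move=> pi hpi.
have [hpos hnz] := hPi pi hpi.
have getS : forall x : vecQ I, in_span A (proj1_sig x) -> has_pattern lt (proj1_sig x) pi ->
    exists s, Pmatch pi s (proj1_sig x) /\ increasing lt s /\ size s = size pi /\
      forall w, w \in s -> A w.
  move=> x [l' [hl'A hsum]] [l [e2 [hinc [hval hzero]]]].
  exists [seq p.1 | p <- l]; split; first by exists l.
  split=> //; split; first by rewrite -e2 !size_map.
  move=> w /mapP [p pl ->].
  have hq : exists q, q \in l' /\ q.1 = p.1.
    apply: NNPP => hn.
    have : proj1_sig x p.1 = 0.
      rewrite hsum big1_seq // => q /andP [_ ql].
      case: eqP => // eq1; exfalso; apply: hn; by exists q.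
    rewrite hval //; apply/eqP; apply: hnz; rewrite -e2; exact: map_f.
  have [q [ql <-]] := hq; exact: hl'A.
have hext : forall s : seq I, increasing lt s -> size s = size pi -> (forall w, w \in s -> A w) ->
    exists s', F s' = F s' /\ increasing lt s' /\ size s' = M.+1 /\ (forall w, w \in s' -> A w)
      /\ take (size pi) s' = s.
  move=> s hs hsz hin.
  have [r [hr [hinc hall]]] := extend tr tot hA hseg (M.+1 - size pi)%N hs hin.
  exists (s ++ r); split=> //; split=> //; split.
    rewrite size_cat hr hsz subnKC //; apply: leq_trans (hM pi hpi) _; exact: leqnSn.
  split=> //; exact: take_size_cat.
move=> x y hxs hxp hys hyp.
have [s [hsm [hsi [hss hsA]]]] := getS x hxs hxp.
have [t [htm [hti [hts htA]]]] := getS y hys hyp.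
have [s' [_ [hsi' [hss' [hsA' hst']]]]] := hext s hsi hss hsA.
have [t' [_ [hti' [hts' [htA' htt']]]]] := hext t hti hts htA.
have eF : F s' = F t'.
  apply: hhom => //.
  - by move=> w /hsA' /hAH.
  - by move=> w /htA' /hAH.
move/(pcan_inj (@pickleK _)): eF => eF.
have := congr1 (fun L => nth 0%N L (index pi Pi)) eF => /=.
rewrite !(nth_map [::]) ?index_mem // nth_index // hst' htt' (chi_eq _ _ _ hsm) (chi_eq _ _ _ htm).
exact: val_inj.
Qed.
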